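(* Let $V$ be a toroidal vertex algebra. For $\mathbf{m}\in\mathbb{Z}^r$ set $V_{(\mathbf{m})}=\{v_{-1,-\mathbf{m}}\mathbf{1}\mid v\in V\}$. Then $V^0=\bigoplus_{\mathbf{m}\in\mathbb{Z}^r}V_{(\mathbf{m})}$, and with this grading the vertex algebra $(V^0,Y^0,\mathbf{1})$ is a vertex $\mathbb{Z}^r$-graded algebra.
   Context: Fix a positive integer $r$. Write $\mathbf{x}=(x_1,\dots,x_r)$, $\mathbf{x}^{\mathbf{m}}=x_1^{m_1}\cdots x_r^{m_r}$ (similarly for other variables), $\mathbf{z}\mathbf{y}=(z_1y_1,\dots,z_ry_r)$. For a vector space $W$ put $\mathcal{E}(W,r)=\mathrm{Hom}(W,W[[x_1^{\pm1},\dots,x_r^{\pm1}]]((x_0)))$. A toroidal vertex algebra is a vector space $V$ with a linear map $Y(\cdot;x_0,\mathbf{x}):V\to\mathcal{E}(V,r)$, $v\mapsto\sum_{(m_0,\mathbf{m})\in\mathbb{Z}\times\mathbb{Z}^r}v_{m_0,\mathbf{m}}x_0^{-m_0-1}\mathbf{x}^{-\mathbf{m}}$, and a vector $\mathbf{1}$ with $Y(\mathbf{1};x_0,\mathbf{x})v=v$, $Y(v;x_0,\mathbf{x})\mathbf{1}\in V[[x_0,x_1^{\pm1},\dots,x_r^{\pm1}]]$, and the Jacobi identity $$z_0^{-1}\delta\!\left(\tfrac{x_0-y_0}{z_0}\right)Y(u;x_0,\mathbf{z}\mathbf{y})Y(v;y_0,\mathbf{y})-z_0^{-1}\delta\!\left(\tfrac{y_0-x_0}{-z_0}\right)Y(v;y_0,\mathbf{y})Y(u;x_0,\mathbf{z}\mathbf{y})=y_0^{-1}\delta\!\left(\tfrac{x_0-z_0}{y_0}\right)Y(Y(u;z_0,\mathbf{z})v;y_0,\mathbf{y})$$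 for all $u,v$, where $Y(u;x_0,\mathbf{z}\mathbf{y})=\sum u_{m_0,\mathbf{m}}x_0^{-m_0-1}\mathbf{z}^{-\mathbf{m}}\mathbf{y}^{-\mathbf{m}}$. $V^0=\mathrm{span}\{v_{m_0,\mathbf{m}}\mathbf{1}\}$; for $v\in V^0$, $Y(v;x_0,\mathbf{x})$ is a Laurent polynomial in $x_1,\dots,x_r$ and $Y^0(v,x_0)=Y(v;x_0,\mathbf{x})|_{\mathbf{x}=1}$ makes $(V^0,Y^0,\mathbf{1})$ a vertex algebra. A vertex $\mathbb{Z}^r$-graded algebra is a vertex algebra $U$ with a grading $U=\bigoplus_{\mathbf{m}\in\mathbb{Z}^r}U_{(\mathbf{m})}$ such that $\mathbf{1}\in U_{(\mathbf{0})}$ and $u_kv\in U_{(\mathbf{m}+\mathbf{n})}$ for $u\in U_{(\mathbf{m})}$, $v\in U_{(\mathbf{n})}$, $k\in\mathbb{Z}$. *)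

(* Defs.v *)
From HB Require Import structures.
From mathcomp Require Import all_boot all_order all_algebra.
Set Implicit Arguments. Unset Strict Implicit. Unset Printing Implicit Defensive.
Import Order.TTheory GRing.Theory Num.Theory.
Local Open Scope ring_scope.

(* Generalized binomial coefficient binom(n, i) for n : int, i : nat,
   i.e. n(n-1)...(n-i+1)/i!.  For n = -(k+1) (Negz k) it equals
   (-1)^i * C(k+i, i). *)
Definition gbin (n : int) (i : nat) : int :=
  match n with
  | Posz n' => ('C(n', i))%:Z
  | Negz k => (-1) ^+ i * ('C(k + i, i))%:Z
  end.

Section Toroidal.
Variables (K : fieldType) (V : lmodType K) (r : nat).

(* A "toroidal vertex operator" is encoded by its modes:
   Y u m0 m w = u_{m0, m} w, where
   Y(u; x0, x) = sum_{(m0, m)} u_{m0,m} x0^{-m0-1} x^{-m}. *)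
Definition modes := V -> int -> 'rV[int]_r -> V -> V.

Definition modes_linear (Y : modes) : Prop :=
  (forall (a : K) u1 u2 m0 m w,
      Y (a *: u1 + u2) m0 m w = a *: Y u1 m0 m w + Y u2 m0 m w) /\
  (forall (a : K) u m0 m w1 w2,
      Y u m0 m (a *: w1 + w2) = a *: Y u m0 m w1 + Y u m0 m w2).

(* Y(u; x0, x) w lies in V[[x^{+-1}]]((x0)): only finitely many negative
   powers of x0, i.e. u_{m0,m} w = 0 for m0 large, uniformly in m. *)
Definition modes_truncation (Y : modes) : Prop :=
  forall u w, exists N : int, forall m0 m, N <= m0 -> Y u m0 m w = 0.

(* Y(1; x0, x) v = v *)
Definition vacuum_property (Y : modes) (one : V) : Prop :=
  forall m0 m v, Y one m0 m v = if (m0 == -1) && (m == 0) then v else 0.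

(* Y(v; x0, x) 1 in V[[x0, x^{+-1}]] *)
Definition creation_property (Y : modes) (one : V) : Prop :=
  forall v m0 m, 0 <= m0 -> Y v m0 m one = 0.

(* Coefficients of x0^{-p-1} y0^{-q-1} z0^{-s-1} z^{-m} y^{-k} of the three
   terms of the Jacobi identity applied to w, with the (finitely supported)
   sums over the binomial-expansion index truncated at N.
   z0^{-1} delta((x0-y0)/z0) = sum_n z0^{-n-1} (x0-y0)^n, expanded in
   nonnegative powers of y0, etc. *)
Definition jacobi_term1 (Y : modes) u v w (p q s : int) (m k : 'rV[int]_r)
  (N : nat) : V :=
  \sum_(i < N) (((-1) ^+ i * gbin s i)%:~R : K) *:
      Y u (p + s - (i : nat)%:Z) m (Y v (q + (i : nat)%:Z) (k - m) w).

Definition jacobi_term2 (Y : modes) u v w (p q s : int) (m k : 'rV[int]_r)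
  (N : nat) : V :=
  \sum_(i < N) (((-1) ^+ (absz s) * (-1) ^+ i * gbin s i)%:~R : K) *:
      Y v (q + s - (i : nat)%:Z) (k - m) (Y u (p + (i : nat)%:Z) m w).

Definition jacobi_term3 (Y : modes) u v w (p q s : int) (m k : 'rV[int]_r)
  (N : nat) : V :=
  \sum_(j < N) (((-1) ^+ j * gbin ((j : nat)%:Z - p - 1) j)%:~R : K) *:
      Y (Y u (s + (j : nat)%:Z) m v) (p + q - (j : nat)%:Z) k w.

(* The Jacobi identity, coefficientwise. Each of the sums above is
   eventually constant in N (by truncation), and the identity says the
   stabilized values agree. *)
Definition jacobi_identity (Y : modes) : Prop :=
  forall u v w (p q s : int) (m k : 'rV[int]_r),
    exists N0 : nat, forall N : nat, (N0 <= N)%N ->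
      jacobi_term1 Y u v w p q s m k N - jacobi_term2 Y u v w p q s m k N
      = jacobi_term3 Y u v w p q s m k N.

Definition toroidal_vertex_algebra (Y : modes) (one : V) : Prop :=
  [/\ modes_linear Y, modes_truncation Y, vacuum_property Y one,
      creation_property Y one & jacobi_identity Y].

(* V^0 = span { v_{m0,m} 1 } *)
Definition inV0 (Y : modes) (one : V) (x : V) : Prop :=
  exists s : seq (K * V * int * 'rV[int]_r),
    x = \sum_(t <- s) t.1.1.1 *: Y t.1.1.2 t.1.2 t.2 one.

Definition inVm (Y : modes) (one : V) (m : 'rV[int]_r) (x : V) : Prop :=
  exists v : V, x = Y v (-1) (- m) one.

End Toroidal.

(* Main.v *)
Require Import Defs.
From HB Require Import structures.
From mathcomp Require Import all_boot all_order all_algebra zify.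
Import Order.TTheory GRing.Theory Num.Theory.
Set Implicit Arguments. Unset Strict Implicit.
Local Open Scope ring_scope.

Lemma gbin0 z : gbin z 0 = 1.
Proof. by case: z => n /=; rewrite ?expr0 ?mul1r ?bin0. Qed.

Lemma Y0r (K : fieldType) (V : lmodType K) (r : nat) (Y : modes V r) :
  modes_linear Y -> forall u m0 m, Y u m0 m 0 = 0.
Proof.
move=> [_ Hr] u m0 m; have := Hr 1 u m0 m 0 0; rewrite !scale1r addr0 => H.
by apply: (addrI (Y u m0 m 0)); rewrite addr0 -H.
Qed.

Lemma Y0l (K : fieldType) (V : lmodType K) (r : nat) (Y : modes V r) :
  modes_linear Y -> forall m0 m w, Y 0 m0 m w = 0.
Proof.
move=> [Hl _] m0 m w; have := Hl 1 0 0 m0 m w; rewrite !scale1r addr0 => H.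
by apply: (addrI (Y 0 m0 m w)); rewrite addr0 -H.
Qed.

Lemma jacB (K : fieldType) (V : lmodType K) (r : nat) (Y : modes V r) one :
  toroidal_vertex_algebra Y one -> forall u v s m k,
  Y (Y u s m v) (-1) k one = Y u s m (Y v (-1) (k - m) one).
Proof.
case=> HL Ht Hvac Hcr Hj u v s m k.
have [N0 HN] := Hj u v one 0 (-1) s m k.
have := HN N0.+1 (leqnSn _).
have -> : jacobi_term1 Y u v one 0 (-1) s m k N0.+1 = Y u s m (Y v (-1) (k - m) one).
  rewrite /jacobi_term1 big_ord_recl big1 ?addr0 => [|i _] /=.
    by rewrite ?gbin0 ?expr0 ?mul1r ?scale1r ?add0r ?subr0 ?addr0.
  by rewrite Hcr ?Y0r ?scaler0 // /bump /=; lia.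
have -> : jacobi_term2 Y u v one 0 (-1) s m k N0.+1 = 0.
  by rewrite /jacobi_term2 big1 // => i _; rewrite Hcr ?Y0r ?scaler0 // /bump /=; lia.
have -> : jacobi_term3 Y u v one 0 (-1) s m k N0.+1 = Y (Y u s m v) (-1) k one.
  rewrite /jacobi_term3 big_ord_recl big1 ?addr0 => [|i _] /=.
    by rewrite ?gbin0 ?expr0 ?mul1r ?scale1r ?addr0 ?add0r ?subr0.

  rewrite bin_small ?mulr0 ?scale0r //; rewrite /bump /=; lia.
by rewrite subr0 => ->.
Qed.

Lemma jacA (K : fieldType) (V : lmodType K) (r : nat) (Y : modes V r) one :
  toroidal_vertex_algebra Y one -> forall a m' k t w, k != m' ->
  Y (Y a (-1) m' one) t k w = 0.
Proof.
case=> HL Ht Hvac Hcr Hj a m' k t w nk.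
have [N0 HN] := Hj a one w t 0 (-1) m' k.
have := HN N0.+1 (leqnSn _).
have nk' : (k - m' == 0) = false by rewrite subr_eq0 (negbTE nk).
have -> : jacobi_term1 Y a one w t 0 (-1) m' k N0.+1 = 0.
  by rewrite /jacobi_term1 big1 // => i _; rewrite Hvac nk' andbF Y0r ?scaler0.
have -> : jacobi_term2 Y a one w t 0 (-1) m' k N0.+1 = 0.
  by rewrite /jacobi_term2 big1 // => i _; rewrite Hvac nk' andbF scaler0.
rewrite /jacobi_term3 big_ord_recl big1 ?addr0 => [|i _] /=.
  by rewrite ?gbin0 ?expr0 ?mul1r ?scale1r ?addr0 ?subr0 => <-.
by rewrite Hcr ?Y0l ?scaler0 // /bump /=; lia.
Qed.

Lemma sum_pick (V : zmodType) (I : eqType) (r : seq I) (j : I) (F : I -> V) :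
  j \in r -> uniq r -> \sum_(i <- r) (if i == j then F i else 0) = F j.
Proof.
move=> jr ur; rewrite (bigD1_seq j) //= eqxx big1 ?addr0 // => i /negPf ->.
by [].
Qed.

Theorem proposition3p2 (K : fieldType) (V : lmodType K) (r : nat)
  (Y : modes V r) (one : V) :
  [pchar K] =i pred0 ->
  toroidal_vertex_algebra Y one ->
  (* V^0 = sum_m V_(m) *)
  (forall x : V, inV0 Y one x <->
     exists (ms : seq 'rV[int]_r) (f : 'rV[int]_r -> V),
       (forall m, inVm Y one m (f m)) /\ x = \sum_(m <- ms) f m) /\
  (* the sum is direct *)
  (forall (ms : seq 'rV[int]_r) (f : 'rV[int]_r -> V),
     uniq ms -> (forall m, m \in ms -> inVm Y one m (f m)) ->
     \sum_(m <- ms) f m = 0 -> forall m, m \in ms -> f m = 0) /\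
  (* vertex Z^r-graded algebra: 1 in V_(0) *)
  inVm Y one 0 one /\
  (* u^0_k w := sum_l u_{k,l} w (= coefficient of x0^{-k-1} in
     Y(u; x0, x)|_{x = 1} w) is a finite sum and lies in V_(m+n) *)
  (forall (m n : 'rV[int]_r) (u w : V) (k : int),
     inVm Y one m u -> inVm Y one n w ->
     exists S : seq 'rV[int]_r,
       [/\ uniq S, (forall l, l \notin S -> Y u k l w = 0)
         & inVm Y one (m + n) (\sum_(l <- S) Y u k l w)]).
Proof.
move=> _ HT.
have HT' := HT; case: HT' => HL Ht Hvac Hcr Hj.
have Y0L := Y0l HL; have Y0R := Y0r HL.
have YD : forall u1 u2 m0 l w, Y (u1 + u2) m0 l w = Y u1 m0 l w + Y u2 m0 l w.
  by move=> u1 u2 m0 l w; have := (proj1 HL) 1 u1 u2 m0 l w; rewrite !scale1r.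
have YZ : forall (a : K) u m0 l w, Y (a *: u) m0 l w = a *: Y u m0 l w.
  by move=> a u m0 l w; have := (proj1 HL) a u 0 m0 l w; rewrite !addr0 Y0L addr0.
have Ysum : forall (I : Type) (s : seq I) (F : I -> V) m0 l w,
    Y (\sum_(i <- s) F i) m0 l w = \sum_(i <- s) Y (F i) m0 l w.
  move=> I s F m0 l w; elim: s => [|a s IH]; first by rewrite !big_nil Y0L.
  by rewrite !big_cons YD IH.
have hom : forall v m0 l, Y v m0 l one = Y (Y v m0 l one) (-1) l one.
  by move=> v m0 l; rewrite (jacB HT) subrr Hvac !eqxx.
have proj : forall m x k, inVm Y one m x ->
    Y x (-1) k one = if k == - m then x else 0.
  move=> m x k [a ->]; case: eqP => [->|/eqP nk]; first by rewrite -hom.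
  exact: (jacA HT).
have inVm0 : forall m, inVm Y one m 0 by move=> m; exists 0; rewrite Y0L.
have inVmD : forall m x y, inVm Y one m x -> inVm Y one m y -> inVm Y one m (x + y).
  by move=> m x y [a ->] [b ->]; exists (a + b); rewrite YD.
split; [|split; [|split]].
- move=> x; split.
  + move=> [s ->].
    pose g (t : K * V * int * 'rV[int]_r) := t.1.1.1 *: Y t.1.1.2 t.1.2 t.2 one.
    pose h (t : K * V * int * 'rV[int]_r) := - t.2.
    exists (undup (map h s)), (fun m => \sum_(t <- s | h t == m) g t); split.
      move=> m; apply: (big_ind (inVm Y one m)); [exact: inVm0|exact: inVmD|move=> t /eqP <-].
      exists (g t); rewrite /g /h YZ opprK -hom //.
    rewrite (exchange_big_dep predT) //=.
    apply: eq_big_seq => t ts.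
    rewrite big_mkcond (eq_bigr (fun i => if i == h t then g t else 0)) => [|i _]; last by rewrite eq_sym.
    rewrite (sum_pick (fun=> g t)) ?undup_uniq // mem_undup; exact: map_f ts.
  + move=> [ms [f [Hf ->]]].
    apply: (big_ind (inV0 Y one)).
    * by exists [::]; rewrite big_nil.
    * move=> x1 x2 [s1 ->] [s2 ->]; exists (s1 ++ s2); by rewrite big_cat.
    * move=> m _; have [v ->] := Hf m.
      by exists [:: (1, v, -1, - m)]; rewrite big_seq1 /= scale1r.
- move=> ms f ums Hf Hs m0 m0ms.
  have := congr1 (fun x => Y x (-1) (- m0) one) Hs; rewrite /= Ysum Y0L.
  rewrite (eq_big_seq (fun m => if m == m0 then f m else 0)) => [|m mms]; last first.
    by rewrite (proj m _ _ (Hf m mms)) eqr_opp eq_sym.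
  by rewrite sum_pick.
- by exists one; rewrite Hvac oppr0 !eqxx.
- move=> m n u w k [a Hu] [b Hw]; exists [:: - m]; split => //.
    by move=> l; rewrite inE => nl; rewrite Hu (jacA HT).
  rewrite big_seq1 Hw; exists (Y u k (- m) b); rewrite (jacB HT).
  by rewrite opprD opprK addrAC addNr add0r.
Qed.
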